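(* Let $G$ be a red-blue colouring of $K_n$, let $u \in V(G)$, and let $A_1, \ldots, A_5$ be pairwise disjoint non-empty subsets of $V(G) \setminus \{u\}$ such that $(A_1, \ldots, A_5)$ is a pentagon blow-up in $G$. Suppose that $(A_1, \ldots, A_5)$ has no bad configuration with respect to $u$. Then $(A_i \cup \{u\}, A_{i+1}, \ldots, A_{i+4})$ is a pentagon blow-up in $G$ for some $i \in [5]$ (indices modulo 5).
   Context: A red-blue colouring of $K_n$ assigns red or blue to each edge of the complete graph on the $n$-vertex set $V(G)$. For pairwise disjoint non-empty sets $A_1,\dots,A_5 \subseteq V(G)$, $(A_1,\dots,A_5)$ is a pentagon blow-up if for every $i \in [5]$ all edges between $A_i$ and $A_{i+1}$ are red and all edges between $A_i$ and $A_{i+2}$ are blue (indices modulo 5). For $u \notin A_1\cup\dots\cup A_5$, a bad configuration in $(A_1,\dots,A_5)$ with respect to $u$ is either a set of three red neighbours of $u$, one from each of $A_i, A_{i+2}, A_{i+3}$ for some $i \in [5]$, or a set of three blue neighbours of $u$, one from each of $A_i, A_{i+1}, A_{i+2}$ for some $i \in [5]$. *)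

(* Defs.v *)
From mathcomp Require Import all_boot.
Set Implicit Arguments. Unset Strict Implicit. Unset Printing Implicit Defensive.

(* A red-blue colouring of the complete graph on vertex set T:
   [red x y] = true means the edge xy is red, false means blue.
   Only values at x <> y are meaningful; we require symmetry. *)
Definition colouring_sym (T : finType) (red : T -> T -> bool) : Prop :=
  forall x y : T, x != y -> red x y = red y x.

Definition sh (i : 'I_5) (k : nat) : 'I_5 :=
  Ordinal (ltn_pmod (i + k) (isT : 0 < 5)).

Definition pentagon_blowup (T : finType) (red : T -> T -> bool)
  (A : 'I_5 -> {set T}) : Prop :=
  (forall i j : 'I_5, i != j -> [disjoint A i & A j]) /\
  (forall i : 'I_5, A i != set0) /\
  (forall i : 'I_5, forall x y, x \in A i -> y \in A (sh i 1) -> red x y) /\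
  (forall i : 'I_5, forall x y, x \in A i -> y \in A (sh i 2) -> ~~ red x y).

Definition bad_config (T : finType) (red : T -> T -> bool)
  (A : 'I_5 -> {set T}) (u : T) : Prop :=
  (exists i : 'I_5, exists x y z,
      [/\ x \in A i, y \in A (sh i 2) & z \in A (sh i 3)] /\
      [/\ red u x, red u y & red u z]) \/
  (exists i : 'I_5, exists x y z,
      [/\ x \in A i, y \in A (sh i 1) & z \in A (sh i 2)] /\
      [/\ ~~ red u x, ~~ red u y & ~~ red u z]).

(* Main.v *)
Require Import Defs.
From mathcomp Require Import all_boot.
Lemma boolL (r b : 'I_5 -> bool) :
   (forall j, r j || b j) ->
   (forall i, ~~ [&& r i, r (sh i 2) & r (sh i 3)]) ->
   (forall i, ~~ [&& b i, b (sh i 1) & b (sh i 2)]) ->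
   exists i, [&& ~~ b (sh i 1), ~~ b (sh i 4), ~~ r (sh i 2) & ~~ r (sh i 3)].
Proof.
pose o (k : nat) : 'I_5 := inord k.
have shE : forall (k m : nat), k < 5 -> sh (o k) m = o ((k + m) %% 5).
  by move=> k m hk; apply/val_inj; rewrite /= !inordK // ltn_pmod.
move=> H0 H1 H2.
have E : forall j : 'I_5, j = o j by move=> j; apply/val_inj; rewrite /= inordK.
suff : [exists i : 'I_5, [&& ~~ b (sh i 1), ~~ b (sh i 4), ~~ r (sh i 2) & ~~ r (sh i 3)]].
  by case/existsP=> i; exists i.
apply: contraT; move=> /existsPn Hn.
have := Hn (o 0); have := Hn (o 1); have := Hn (o 2); have := Hn (o 3); have := Hn (o 4).
have := H1 (o 0); have := H1 (o 1); have := H1 (o 2); have := H1 (o 3); have := H1 (o 4).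
have := H2 (o 0); have := H2 (o 1); have := H2 (o 2); have := H2 (o 3); have := H2 (o 4).
have := H0 (o 0); have := H0 (o 1); have := H0 (o 2); have := H0 (o 3); have := H0 (o 4).
rewrite !shE //.
rewrite /=.
case: (r (o 0)); case: (r (o 1)); case: (r (o 2)); case: (r (o 3)); case: (r (o 4));
case: (b (o 0)); case: (b (o 1)); case: (b (o 2)); case: (b (o 3)); case: (b (o 4)) => //.
Qed.

Lemma shV (i : 'I_5) k : val (sh i k) = (i + k) %% 5.
Proof. by []. Qed.

Lemma sh0 (i : 'I_5) : sh i (@ord0 4) = i.
Proof. by apply/val_inj; rewrite shV addn0 modn_small. Qed.

Lemma shA (i j : 'I_5) k : sh i (sh j k) = sh (sh i j) k.
Proof. by apply/val_inj; rewrite !shV modnDmr modnDml addnA. Qed.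

Lemma sh_inj (i j k : 'I_5) : sh i j = sh i k -> j = k.
Proof.
move/(congr1 val); rewrite !shV => e; apply/val_inj.
have := ltn_ord i; have := ltn_ord j; have := ltn_ord k.
case: i e => [[|[|[|[|[|]]]]] //= _]; case: j => [[|[|[|[|[|]]]]] //= _];
case: k => [[|[|[|[|[|]]]]] //= _].
Qed.

Theorem proposition7p10 (T : finType) (red : T -> T -> bool) (u : T)
  (A : 'I_5 -> {set T}) :
  colouring_sym red ->
  (forall i : 'I_5, u \notin A i) ->
  pentagon_blowup red A ->
  ~ bad_config red A u ->
  exists i : 'I_5,
    pentagon_blowup red
      (fun j : 'I_5 => if j == ord0 then u |: A i else A (sh i j)).
Proof.
move=> Hsym Hu [Hdis [Hne [Hred Hblue]]] Hbad.
pose r j := [exists x in A j, red u x].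
pose b j := [exists x in A j, ~~ red u x].
have H0 : forall j, r j || b j.
  move=> j; case/set0Pn: (Hne j) => x Hx.
  case Rx: (red u x).
    by apply/orP; left; apply/exists_inP; exists x.
  by apply/orP; right; apply/exists_inP; exists x => //; rewrite Rx.
have H1 : forall i, ~~ [&& r i, r (sh i 2) & r (sh i 3)].
  move=> i; apply/negP => /and3P [/exists_inP [x Hx Rx] /exists_inP [y Hy Ry] /exists_inP [z Hz Rz]].
  by apply: Hbad; left; exists i, x, y, z; split; apply/and3P; rewrite ?Hx ?Hy ?Hz ?Rx ?Ry ?Rz.
have H2 : forall i, ~~ [&& b i, b (sh i 1) & b (sh i 2)].
  move=> i; apply/negP => /and3P [/exists_inP [x Hx Rx] /exists_inP [y Hy Ry] /exists_inP [z Hz Rz]].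
  by apply: Hbad; right; exists i, x, y, z; split; apply/and3P; rewrite ?Hx ?Hy ?Hz ?Rx ?Ry ?Rz.
have [i /and4P [Hb1 Hb4 Hr2 Hr3]] := @boolL r b H0 H1 H2.
have allR : forall k, ~~ b k -> forall y, y \in A k -> red u y.
  move=> k Hk y Hy; apply/negPn/negP => Hn; move/negP: Hk; apply.
  by apply/exists_inP; exists y.
have allB : forall k, ~~ r k -> forall y, y \in A k -> ~~ red u y.
  move=> k Hk y Hy; apply/negP => Hn; move/negP: Hk; apply.
  by apply/exists_inP; exists y.
exists i.
set F := fun j : 'I_5 => _.
have memF : forall j x, x \in F j -> (j = ord0 /\ x = u) \/ x \in A (sh i j).
  move=> j x; rewrite /F; case: eqP => [-> | _] //; last by right.
  by rewrite in_setU1 sh0 => /orP [/eqP ->|]; [left | right].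
have subF : forall (j : 'I_5) x, x \in A (sh i j) -> x \in F j.
  move=> j x; rewrite /F; case: eqP => [-> | _] //.
  by rewrite sh0 in_setU1 => ->; rewrite orbT.
have neu : forall j x, x \in A j -> x != u.
  by move=> j x Hx; apply/eqP => e; move: (Hu j); rewrite -e Hx.
split; [|split; [|split]].
- move=> j k Hjk; rewrite -setI_eq0; apply/eqP/setP => x; rewrite in_set0 inE.
  apply/negP => /andP [/memF Hj /memF Hk].
  case: Hj => [[ej ex]|Hj]; case: Hk => [[ek ex']|Hk].
  + by move: Hjk; rewrite ej ek eqxx.
  + by move: (Hu (sh i k)); rewrite -ex Hk.
  + by move: (Hu (sh i j)); rewrite -ex' Hj.
  + have /Hdis : sh i j != sh i k by apply: contra Hjk => /eqP /sh_inj ->.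
    by move/disjointFr => /(_ x Hj); rewrite Hk.
- move=> j; case/set0Pn: (Hne (sh i j)) => x Hx; apply/set0Pn; exists x; exact: subF.
- move=> j x y /memF Hx /memF Hy.
  case: Hx => [[ej ex]|Hx]; case: Hy => [[ek ey]|Hy].
  + by move: ek; rewrite ej => /(congr1 val).
  + by rewrite ex; apply: (allR _ Hb1); move: Hy; rewrite ej shA sh0.
  + have ej : j = sh ord0 4.
      move: ek => /(congr1 val); rewrite shV => e; apply/val_inj.
      by case: j Hx e => [[|[|[|[|[|]]]]] //= _].
    rewrite ey -Hsym; last by rewrite ?(eq_sym u) (neu _ _ Hx).
    by apply: (allR _ Hb4); move: Hx; rewrite ej shA sh0.
  + by apply: Hred Hx _; rewrite -shA.
- move=> j x y /memF Hx /memF Hy.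
  case: Hx => [[ej ex]|Hx]; case: Hy => [[ek ey]|Hy].
  + by move: ek; rewrite ej => /(congr1 val).
  + by rewrite ex; apply: (allB _ Hr2); move: Hy; rewrite ej shA sh0.
  + have ej : j = sh ord0 3.
      move: ek => /(congr1 val); rewrite shV => e; apply/val_inj.
      by case: j Hx e => [[|[|[|[|[|]]]]] //= _].
    rewrite ey -Hsym; last by rewrite ?(eq_sym u) (neu _ _ Hx).
    by apply: (allB _ Hr3); move: Hx; rewrite ej shA sh0.
  + by apply: Hblue Hx _; rewrite -shA.
Qed.
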